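(* Let $(G,\sigma)$ be a signed graph, $\tau:V\to\{\pm1\}$ a switching function, $p>1$, $K\in\mathbb{R}$, $N\in(0,\infty]$ and $x\in V$. Then $(G,\sigma)$ satisfies $CD_p^\sigma(K,N)$ at $x$ if and only if $(G,\sigma^\tau)$ satisfies $CD_p^{\sigma^\tau}(K,N)$ at $x$, where $\sigma^\tau_{uv}=\tau(u)\sigma_{uv}\tau(v)$ for $\{u,v\}\in E$.
   Context: $G=(V,E)$ is a locally finite simple graph with degrees $d_x$; $\sigma:E\to\{\pm1\}$, $\sigma_{xy}=\sigma(\{x,y\})$. For $p>1$: $\Delta_{p}^{\sigma}f(x)=\frac{1}{d_{x}}\sum_{y\sim x}|\sigma_{xy}f(y)-f(x)|^{p-2}(\sigma_{xy}f(y)-f(x))$ (with $|t|^{p-2}t=0$ at $t=0$); $\Gamma_p^\sigma(f,g)(x)=\frac{1}{2d_{x}}\sum_{y\sim x}|\sigma_{xy}f(y)-f(x)|^{p-2}(\sigma_{xy}f(y)-f(x))(\sigma_{xy}g(y)-g(x))$; $\mathscr{L}^\sigma_{p,f}\varphi(x)=\frac{1}{d_{x}}\sum_{y\sim x}|\sigma_{xy}f(y)-f(x)|^{p-2}(\varphi(y)-\varphi(x))$; and $\Gamma_{p,2}^\sigma(f,f)(x)=\frac12\mathscr{L}_{p,f}^\sigma(\Gamma^\sigma_p(f,f))(x)-\Gamma_p^\sigma(f,\Delta_p^\sigma f)(x)$ (defined at any $x$ if $p\ge2$, and at $x$ with $\sigma_{xy}f(y)-f(x)\ne0$ for all $y\sim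 x$ if $1<p<2$). $(G,\sigma)$ satisfies $CD_p^\sigma(K,N)$ at $x$ if $\Gamma_{p,2}^{\sigma}(f,f)(x)\geq\frac{1}{N}(\Delta_{p}^{\sigma}f(x))^{2}+K(\Gamma^{\sigma}_{p}(f,f)(x))^{\frac{2p-2}{p}}$ for every $f:V\to\mathbb{R}$ with $\sigma_{xy}f(y)-f(x)\neq0$ for every neighbor $y\sim x$ ($\frac1N=0$ if $N=\infty$). *)

(* Defs.v *)
From HB Require Import structures.
From mathcomp Require Import all_boot all_order all_algebra.
From mathcomp Require Import reals constructive_ereal exp.
Set Implicit Arguments. Unset Strict Implicit. Unset Printing Implicit Defensive.
Import Order.TTheory GRing.Theory Num.Theory.
Local Open Scope ring_scope.

Section SignedGraph.
Variables (R : realType) (V : eqType).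

(* A locally finite simple graph on V (possibly infinite): nb x is the finite
   list of neighbours of x, without repetitions, without loops, symmetric. *)
Definition simple_graph (nb : V -> seq V) : Prop :=
  (forall x, uniq (nb x)) /\ (forall x, x \notin nb x) /\
  (forall x y, y \in nb x -> x \in nb y).

(* sigma : E -> {+1,-1}, represented as a symmetric function on adjacent pairs *)
Definition signature (nb : V -> seq V) (sigma : V -> V -> R) : Prop :=
  forall x y, y \in nb x -> sigma x y = sigma y x /\ (sigma x y = 1 \/ sigma x y = -1).

Definition switching_fun (tau : V -> R) : Prop := forall v, tau v = 1 \/ tau v = -1.

Definition switch (sigma : V -> V -> R) (tau : V -> R) : V -> V -> R :=
  fun u v => tau u * sigma u v * tau v.

Variable nb : V -> seq V.

Definition deg (x : V) : R := (size (nb x))%:R.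

Definition sdiff (sigma : V -> V -> R) (f : V -> R) (x y : V) : R :=
  sigma x y * f y - f x.

(* |t|^{p-2} t, which equals 0 at t = 0 (powR 0 a * 0 = 0) *)
Definition spow (p t : R) : R := powR `|t| (p - 2) * t.

Definition pLap (p : R) (sigma : V -> V -> R) (f : V -> R) (x : V) : R :=
  (deg x)^-1 * \sum_(y <- nb x) spow p (sdiff sigma f x y).

Definition pGamma (p : R) (sigma : V -> V -> R) (f g : V -> R) (x : V) : R :=
  (2 * deg x)^-1 *
    \sum_(y <- nb x) spow p (sdiff sigma f x y) * sdiff sigma g x y.

Definition pLf (p : R) (sigma : V -> V -> R) (f phi : V -> R) (x : V) : R :=
  (deg x)^-1 *
    \sum_(y <- nb x) powR `|sdiff sigma f x y| (p - 2) * (phi y - phi x).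

Definition pGamma2 (p : R) (sigma : V -> V -> R) (f : V -> R) (x : V) : R :=
  2^-1 * pLf p sigma f (pGamma p sigma f f) x - pGamma p sigma f (pLap p sigma f) x.

(* 1/N with the convention 1/oo = 0 (N is assumed in (0, oo]) *)
Definition invN (N : \bar R) : R :=
  match N with EFin r => r^-1 | _ => 0 end.

Definition CDp (p : R) (sigma : V -> V -> R) (K : R) (N : \bar R) (x : V) : Prop :=
  forall f : V -> R, (forall y, y \in nb x -> sdiff sigma f x y != 0) ->
    pGamma2 p sigma f x >=
      invN N * (pLap p sigma f x) ^+ 2
      + K * powR (pGamma p sigma f f x) ((2 * p - 2) / p).

End SignedGraph.

(* Main.v *)
Require Import Defs.
From HB Require Import structures.
From mathcomp Require Import all_boot all_order all_algebra.
From mathcomp Require Import reals constructive_ereal exp.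
Import Order.TTheory GRing.Theory Num.Theory.
Local Open Scope ring_scope.

Section Sw.
Variables (R : realType) (V : eqType) (nb : V -> seq V).
Variables (sigma sigma' : V -> V -> R) (tau : V -> R) (p : R).
Hypothesis Htau : switching_fun tau.
Hypothesis Hs : forall u v, sigma' u v = tau u * sigma u v * tau v.

Lemma tt1 u : tau u * tau u = 1.
Proof. by case: (Htau u) => ->; rewrite ?mulr1 ?mulrNN ?mulr1. Qed.

Lemma ntau u : `|tau u| = 1.
Proof. by case: (Htau u) => ->; rewrite ?normrN normr1. Qed.

Lemma sdiff_sw h h' u v : (forall w, h' w = tau w * h w) ->
  sdiff sigma' h' u v = tau u * sdiff sigma h u v.
Proof.
move=> Hh; rewrite /sdiff Hs !Hh.
have := tt1 v; have := tt1 u.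
set a := tau u; set b := tau v => Ha Hb.
rewrite mulrBr; congr (_ - _).
by rewrite -!mulrA (mulrA b b) Hb mul1r.
Qed.

Lemma spow_sw u t : spow p (tau u * t) = tau u * spow p t.
Proof. by rewrite /spow normrM ntau mul1r mulrCA. Qed.

Lemma pLap_sw h h' u : (forall w, h' w = tau w * h w) ->
  pLap nb p sigma' h' u = tau u * pLap nb p sigma h u.
Proof.
move=> Hh; rewrite /pLap [RHS]mulrCA [in RHS]mulr_sumr; congr (_ * _).
by apply: eq_bigr => y _; rewrite (sdiff_sw _ _ _ _ Hh) spow_sw.
Qed.

Lemma pGamma_sw h1 h1' h2 h2' u : (forall w, h1' w = tau w * h1 w) ->
  (forall w, h2' w = tau w * h2 w) ->
  pGamma nb p sigma' h1' h2' u = pGamma nb p sigma h1 h2 u.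
Proof.
move=> H1 H2; rewrite /pGamma; congr (_ * _).
apply: eq_bigr => y _; rewrite (sdiff_sw _ _ _ _ H1) (sdiff_sw _ _ _ _ H2) spow_sw.
have := tt1 u; set a := tau u => Ha.
by rewrite mulrCA !mulrA Ha mul1r.
Qed.

Lemma pLf_sw h h' phi phi' u : (forall w, h' w = tau w * h w) ->
  (forall w, phi' w = phi w) ->
  pLf nb p sigma' h' phi' u = pLf nb p sigma h phi u.
Proof.
move=> Hh Hp; rewrite /pLf; congr (_ * _).
apply: eq_bigr => y _; rewrite (sdiff_sw _ _ _ _ Hh) !Hp.
by rewrite normrM ntau mul1r.
Qed.

Lemma CD_sw K N x : CDp nb p sigma K N x -> CDp nb p sigma' K N x.
Proof.
move=> HC g Hg.
pose f := fun w => tau w * g w.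
have Hgf : forall w, g w = tau w * f w.
  by move=> w; rewrite /f mulrA tt1 mul1r.
have Hf : forall y, y \in nb x -> sdiff sigma f x y != 0.
  move=> y /Hg; rewrite (sdiff_sw _ _ _ _ Hgf).
  by apply: contra => /eqP ->; rewrite mulr0.
have := HC f Hf.
have E1 : pGamma2 nb p sigma' g x = pGamma2 nb p sigma f x.
  rewrite /pGamma2; congr (_ * _ - _).
    by apply: pLf_sw => // w; apply: pGamma_sw.
  apply: pGamma_sw => // w; exact: pLap_sw.
rewrite E1 (pLap_sw _ _ _ Hgf) (pGamma_sw _ _ _ _ _ Hgf Hgf).
by move=> H; rewrite expr2 mulrACA tt1 mul1r -expr2.
Qed.
End Sw.

Theorem proposition4p8 (R : realType) (V : eqType) (nb : V -> seq V)
  (sigma : V -> V -> R) (tau : V -> R) (p K : R) (N : \bar R) (x : V) :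
  simple_graph nb -> signature nb sigma -> switching_fun tau ->
  1 < p -> (0 < N)%E ->
  (CDp nb p sigma K N x <-> CDp nb p (switch sigma tau) K N x).
Proof.
move=> _ _ Ht _ _; split; apply: CD_sw => // u v; rewrite /switch //.
have Hu := @tt1 R V tau Ht u; have Hv := @tt1 R V tau Ht v.
rewrite -!mulrA Hv mulr1 mulrA Hu mul1r //.

Qed.
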